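(* Under assumption (A3), at any round $t$, for any fixed unit vector $\theta\in\mathbb R^d$ and for any arm $a_t\in\mathcal A_t$ selected by the agent (possibly depending on $\mathcal A_t$ and the history), $$\mathbb E_t\big[(\theta^\top x_{a_t})^2\,\big|\,|\mathcal A_t|\big]\ \ge\ \tilde\lambda_x:=\int_0^{\lambda_x}\Big(1-e^{-\frac{(\lambda_x-s)^2}{2\sigma^2}}\Big)^K\,ds,$$ where $K$ is an upper bound on $|\mathcal A_t|$ for all $t$.
   Context: Assumption (A3): at each round $t$ the arm set $\mathcal A_t$ has at most $K$ arms, and the feature vectors $x_a$, $a\in\mathcal A_t$, are drawn independently (of each other and of the past) from a fixed distribution $\rho$ on $\{x\in\mathbb R^d:\|x\|_2\le1\}$, with $\lambda_x:=\lambda_{\min}(\mathbb E_{x\sim\rho}[xx^\top])>0$; moreover for every fixed unit vector $z$ the centered variable $(z^\top x)^2-\mathbb E[(z^\top x)^2]$, $x\sim\rho$, is sub-Gaussian with variance proxy at most $\sigma^2$ (so that $\mathbb P((z^\top x)^2-\mathbb E[(z^\top x)^2]<-s)\le e^{-s^2/(2\sigma^2)}$ for $s>0$). $\mathbb E_t[\cdot]$ denotes conditional expectation given $(i_1,\mathcal A_1,r_1),\dots,(i_{t-1},\mathcal A_{t-1},r_{t-1}),i_t$. *)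

(* Defs.v *)
From HB Require Import structures.
From mathcomp Require Import all_boot all_order all_algebra.
From mathcomp Require Import all_classical all_reals all_analysis.
Set Implicit Arguments. Unset Strict Implicit. Unset Printing Implicit Defensive.
Import Order.TTheory GRing.Theory Num.Theory.
Import numFieldNormedType.Exports.
Local Open Scope classical_set_scope.
Local Open Scope ring_scope.

Definition vecB (R : realType) (d : nat) := g_sigma_algebraType (@open 'rV[R]_d).

Definition dotv (R : realType) (d : nat) (u v : 'rV[R]_d) : R :=
  \sum_(j < d) u 0 j * v 0 j.
Definition norm2 (R : realType) (d : nat) (u : 'rV[R]_d) : R :=
  Num.sqrt (dotv u u).

Definition second_moment (R : realType) (d : nat) (rho : probability (vecB R d) R)
  : 'M[R]_d :=
  \matrix_(i, j) Rintegral rho setT (fun x : vecB R d => x 0 i * x 0 j).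

Definition is_lambda_min (R : realType) (d : nat) (M : 'M[R]_d) (lam : R) : Prop :=
  eigenvalue M lam /\ (forall a, eigenvalue M a -> lam <= a).

Definition subgauss_sq_proj (R : realType) (d : nat) (rho : probability (vecB R d) R)
  (s2 : R) : Prop :=
  forall z : 'rV[R]_d, norm2 z = 1 ->
  forall t : R,
    (\int[rho]_(x in setT)
       (expR (t * ((dotv z x) ^+ 2
                   - Rintegral rho setT (fun y : vecB R d => (dotv z y) ^+ 2))))%:E
     <= (expR (s2 * t ^+ 2 / 2))%:E)%E.

Definition iid_law (d0 : measure_display) (O : measurableType d0) (R : realType)
  (P : probability O R) (d k : nat) (rho : probability (vecB R d) R)
  (X : 'I_k -> O -> vecB R d) : Prop :=
  forall B : 'I_k -> set (vecB R d), (forall i, measurable (B i)) ->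
    P (\bigcap_(i in [set: 'I_k]) (X i @^-1` B i)) = (\prod_(i < k) rho (B i))%E.

(* Main.v *)
Require Import Defs.
From HB Require Import structures.
From mathcomp Require Import all_boot all_order all_algebra.
From mathcomp Require Import all_classical all_reals all_analysis.
From mathcomp Require Import ring lra.
Import Order.TTheory GRing.Theory Num.Theory.
Import numFieldNormedType.Exports.
Local Open Scope classical_set_scope.
Local Open Scope ring_scope.
Lemma cont_sum (R : realType) (T : topologicalType) (I : Type) (s : seq I)
  (F : I -> T -> R) :
  (forall i, continuous (F i)) -> continuous (fun x => \sum_(i <- s) F i x).
Proof.
move=> hF; elim: s => [|i s ih].
  by under eq_fun do rewrite big_nil; exact: cst_continuous.
under eq_fun do rewrite big_cons.
by move=> x; apply: cvgD; [exact: hF | exact: ih].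
Qed.

Lemma cont_dot {R : realType} {d : nat} (u : 'rV[R]_d) :
  continuous (fun x : 'rV[R]_d => dotv u x).
Proof.
rewrite /dotv; apply: cont_sum => j x.
exact: (@continuousM R _ (fun=> u 0 j) (fun x : 'rV[R]_d => x 0 j) x
  (@cst_continuous _ _ _ x) (@coord_continuous R 1 d 0 j x)).
Qed.

Lemma meas_cont {R : realType} {d : nat} (f : 'rV[R]_d -> R) :
  continuous f -> measurable_fun (setT : set (vecB R d)) f.
Proof.
move=> cf; apply: (measurability _ (measurable_realfun.RGenOpens.measurableE R)).
move=> _ [_ [x [y ->]] <-]; apply: sub_sigma_algebra; rewrite setTI.
by apply: (proj1 (continuousP f) cf); apply: interval_open.
Qed.

Lemma dotvC {R : realType} {d : nat} (u w : 'rV[R]_d) : dotv u w = dotv w u.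
Proof. by rewrite /dotv; apply: eq_bigr => j _; rewrite mulrC. Qed.

Lemma dotvDl {R : realType} {d : nat} (u v w : 'rV[R]_d) :
  dotv (u + v) w = dotv u w + dotv v w.
Proof. by rewrite /dotv -big_split; apply: eq_bigr => j _; rewrite mxE mulrDl. Qed.

Lemma dotvZl {R : realType} {d : nat} a (u w : 'rV[R]_d) :
  dotv (a *: u) w = a * dotv u w.
Proof. by rewrite /dotv mulr_sumr; apply: eq_bigr => j _; rewrite mxE mulrA. Qed.

Lemma dotvDr {R : realType} {d : nat} (u v w : 'rV[R]_d) :
  dotv w (u + v) = dotv w u + dotv w v.
Proof. by rewrite dotvC dotvDl !(dotvC w). Qed.

Lemma dotvZr {R : realType} {d : nat} a (u w : 'rV[R]_d) :
  dotv w (a *: u) = a * dotv w u.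
Proof. by rewrite dotvC dotvZl dotvC. Qed.

Lemma dotvE {R : realType} {d : nat} (u w : 'rV[R]_d) : dotv u w = (u *m w^T) 0 0.
Proof. by rewrite /dotv mxE; apply: eq_bigr => j _; rewrite mxE. Qed.

Lemma dotv_sym {R : realType} {d : nat} (M : 'M[R]_d) (u w : 'rV[R]_d) :
  M^T = M -> dotv u (w *m M) = dotv w (u *m M).
Proof.
move=> MT; rewrite !dotvE !trmx_mul MT !mulmxA.
have -> : w *m M *m u^T = (u *m M *m w^T)^T.
  by rewrite !trmx_mul trmxK MT mulmxA.
by rewrite [in RHS]mxE.
Qed.

Lemma dotv_ge0 {R : realType} {d : nat} (u : 'rV[R]_d) : 0 <= dotv u u.
Proof. by rewrite /dotv; apply: sumr_ge0 => j _; rewrite -expr2 sqr_ge0. Qed.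

Lemma dotv_coord {R : realType} {d : nat} (u : 'rV[R]_d) j : u 0 j ^+ 2 <= dotv u u.
Proof.
rewrite /dotv (bigD1 j) //= expr2 lerDl; apply: sumr_ge0 => i _.
by rewrite -expr2 sqr_ge0.
Qed.

Lemma dotv_eq0 {R : realType} {d : nat} (u : 'rV[R]_d) : dotv u u = 0 -> u = 0.
Proof.
move=> h; apply/rowP => j; rewrite mxE.
have := dotv_coord u j; rewrite h => hj.
have : u 0 j ^+ 2 = 0 by apply/eqP; rewrite eq_le hj sqr_ge0.
by move/eqP; rewrite sqrf_eq0 => /eqP.
Qed.

Lemma dot0l {R : realType} {d : nat} (u : 'rV[R]_d) : dotv 0 u = 0.
Proof. by rewrite /dotv big1 // => j _; rewrite mxE mul0r. Qed.

Lemma cont_mulmx {R : realType} {d : nat} (M : 'M[R]_d) j :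
  continuous (fun z : 'rV[R]_d => (z *m M) 0 j).
Proof.
have -> : (fun z : 'rV[R]_d => (z *m M) 0 j) = (fun z => dotv z (col j M)^T).
  by apply: funext => z; rewrite /dotv mxE; apply: eq_bigr => k _; rewrite !mxE.
by under eq_fun do rewrite dotvC; exact: cont_dot.
Qed.

Lemma cont_q {R : realType} {d : nat} (M : 'M[R]_d) :
  continuous (fun z : 'rV[R]_d => dotv z (z *m M)).
Proof.
rewrite /dotv; apply: cont_sum => j x.
exact: (@continuousM R _ (fun z : 'rV[R]_d => z 0 j) (fun z => (z *m M) 0 j) x
  (@coord_continuous R 1 d 0 j x) (@cont_mulmx R d M j x)).
Qed.

Lemma cont_dd {R : realType} {d : nat} :
  continuous (fun z : 'rV[R]_d => dotv z z).
Proof.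
have := cont_q (1%:M : 'M[R]_d).
by under eq_fun do rewrite mulmx1.
Qed.
Lemma dotvNr {R : realType} {d : nat} (u w : 'rV[R]_d) :
  dotv w (- u) = - dotv w u.
Proof. by rewrite -scaleN1r dotvZr mulN1r. Qed.

Lemma quad_nonneg {R : realType} (a b : R) : 0 <= b ->
  (forall t, 0 <= t * 2 * b + t ^+ 2 * a) -> b = 0.
Proof.
move=> b0 h; pose u := `|a| + 1.
have u0 : 0 < u by rewrite /u ltr_pwDr.
have ha : a <= `|a| by exact: ler_norm.
have na : 0 <= `|a| := normr_ge0 a.
pose t := - b / u.
have e : u ^+ 2 * (t * 2 * b + t ^+ 2 * a) = b ^+ 2 * (a - 2 * u).
  by rewrite /t; field; rewrite gt_eqF.
have e0 : 0 <= u ^+ 2 * (t * 2 * b + t ^+ 2 * a) by rewrite mulr_ge0 ?sqr_ge0.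
rewrite e in e0.
have hu : a - 2 * u < 0 by rewrite /u; lra.
have e1 : b ^+ 2 * (a - 2 * u) <= 0 := mulr_ge0_le0 (sqr_ge0 b) (ltW hu).
have : b ^+ 2 * (a - 2 * u) == 0 by rewrite eq_le e1 e0.
rewrite mulf_eq0 (negbTE (ltr0_neq0 hu)) orbF sqrf_eq0.
by move/eqP.
Qed.

Lemma bounded_rV {R : realType} {d : nat} (A : set 'rV[R]_d) :
  (forall z, A z -> `|z| <= 1) -> bounded_set A.
Proof.
move=> h; rewrite /bounded_set /= /bounded_near.
near=> M => z Az; apply: le_trans (h z Az) _.
by near: M; apply: nbhs_pinfty_ge.
Unshelve. all: by end_near.
Qed.
Lemma spectral_min {R : realType} {d : nat} (M : 'M[R]_d) (lam : R)
  (theta : 'rV[R]_d) :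
  M^T = M -> is_lambda_min M lam -> dotv theta theta = 1 ->
  lam <= dotv theta (theta *m M).
Proof.
move=> MT [_ lammin] th1.
pose S := [set z : 'rV[R]_d | dotv z z = 1].
have S0 : S !=set0 by exists theta.
have cS : compact S.
  apply: bounded_closed_compact.
    apply: bounded_rV => z Sz.
    rewrite [X in X <= _]/Num.norm /= mx_normrE; apply: bigmax_le => //= -[i j] _ /=.
    have := dotv_coord z j; rewrite Sz (ord1 i) => hz.
    have n0 := normr_ge0 (z 0 j).
    have : `|z 0 j| ^+ 2 <= 1 by rewrite real_normK // num_real.
    nra.
  have -> : S = (fun z => dotv z z) @^-1` [set 1] by [].
  by apply: closed_comp => [x _|]; [exact: cont_dd | exact: closed_eq].
have [v] := EVT_min_rV S0 cS (continuous_subspaceT (@cont_q R d M)).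
rewrite inE => Sv vmin.
set mu := dotv v (v *m M).
have key z : mu * dotv z z <= dotv z (z *m M).
  have [z0|zn0] := eqVneq (dotv z z) 0.
    by rewrite z0 mulr0 (dotv_eq0 z z0) dot0l.
  have c0 : 0 < dotv z z by rewrite lt_neqAle eq_sym zn0 dotv_ge0.
  pose s := Num.sqrt (dotv z z).
  have s0 : 0 < s by rewrite sqrtr_gt0.
  have ss : s ^+ 2 = dotv z z by rewrite sqr_sqrtr // ltW.
  have Sz' : S (s^-1 *: z).
    by rewrite /S /= dotvZl dotvZr mulrA -expr2 exprVn ss mulVf.
  have := vmin _ (mem_set Sz'); rewrite -/mu -scalemxAl dotvZl dotvZr mulrA.
  rewrite -expr2 exprVn ss => hm.
  by rewrite -ler_pdivlMr // mulrC.
have eig : v *m M = mu *: v.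
  pose w := v *m M - mu *: v.
  have ew : dotv w (v *m M) = dotv w w + mu * dotv w v.
    by rewrite {2}/w dotvDr dotvNr dotvZr; ring.
  have wE : v *m M = w + mu *: v by rewrite /w subrK.
  clearbody w.
  have h t : 0 <= t * 2 * dotv w w + t ^+ 2 * (dotv w (w *m M) - mu * dotv w w).
    have := key (v + t *: w).
    rewrite mulmxDl -scalemxAl !dotvDl !dotvDr !dotvZl !dotvZr.
    rewrite (dotv_sym M v w MT) Sv ew (dotvC v w) -/mu.
    move=> hk; nra.
  have := @quad_nonneg R _ _ (dotv_ge0 w) h => /dotv_eq0 w0.
  by rewrite wE w0 add0r.
have vn0 : v != 0.
  by apply/eqP => v0; move: Sv; rewrite v0 /S /= dot0l => /eqP; rewrite eq_sym oner_eq0.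
have lm : lam <= mu by apply: lammin; apply/eigenvalueP; exists v.
by apply: le_trans lm (vmin _ (mem_set th1)).
Qed.
Lemma meas_dot {R : realType} {d : nat} (u : 'rV[R]_d) :
  measurable_fun (setT : set (vecB R d)) (fun x : vecB R d => dotv u x).
Proof. exact: meas_cont (cont_dot u). Qed.

Lemma meas_coordM {R : realType} {d : nat} (i j : 'I_d) :
  measurable_fun (setT : set (vecB R d)) (fun x : vecB R d => x 0 i * x 0 j).
Proof.
apply: meas_cont => x.
exact: (@continuousM R _ (fun z : 'rV[R]_d => z 0 i) (fun z => z 0 j) x
  (@coord_continuous R 1 d 0 i x) (@coord_continuous R 1 d 0 j x)).
Qed.

Lemma S1_meas {R : realType} {d : nat} :
  measurable [set x : vecB R d | dotv x x <= 1].
Proof.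
have := @meas_cont R d _ (@cont_dd R d) measurableT _ (measurable_itv `]-oo, 1]).
rewrite setTI => h.
suff -> : [set x : vecB R d | dotv x x <= 1] =
  (fun x : vecB R d => dotv x x) @^-1` `]-oo, 1] by [].
by apply/seteqP; split => x /=; rewrite in_itv /=.
Qed.

Lemma norm2_le1 {R : realType} {d : nat} (x : 'rV[R]_d) :
  (norm2 x <= 1) = (dotv x x <= 1).
Proof. by rewrite /norm2 -[X in _ <= X]sqrtr1 ler_sqrt. Qed.

Lemma S1_null {R : realType} {d : nat} (rho : probability (vecB R d) R) :
  rho [set x : vecB R d | norm2 x <= 1] = 1%E ->
  rho (~` [set x : vecB R d | dotv x x <= 1]) = 0%E.
Proof.
move=> h; rewrite probability_setC; last exact: S1_meas.
have -> : [set x : vecB R d | dotv x x <= 1] = [set x : vecB R d | norm2 x <= 1].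
  by apply/seteqP; split => x /=; rewrite norm2_le1.
by rewrite h subee.
Qed.

Lemma integ_coordM {R : realType} {d : nat} (rho : probability (vecB R d) R)
  (i j : 'I_d) :
  rho [set x : vecB R d | norm2 x <= 1] = 1%E ->
  rho.-integrable setT (EFin \o (fun x : vecB R d => x 0 i * x 0 j)).
Proof.
move=> hS; have nS := S1_null rho hS.
have mf := @meas_coordM R d i j.
apply/integrableP; split; first exact/measurable_realfun.measurable_EFinP.

apply: (@le_lt_trans _ _ (\int[rho]_(x in setT) (cst 1%E) x)%E); last first.
  by rewrite integral_cst // mul1e ltey_eq fin_num_measure.
apply: ae_ge0_le_integral => //.
- set f := (fun x0 : vecB R d => x0 0 i * x0 0 j) in mf *.
  have -> : (fun x : vecB R d => (`|(EFin \o f) x|)%E)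
      = EFin \o ((fun r : R => `|r|) \o f) by [].
  apply/measurable_realfun.measurable_EFinP.
  apply: measurableT_comp; first exact: measurable_realfun.normr_measurable.
  exact: mf.
- exists (~` [set x : vecB R d | dotv x x <= 1]); split => //.
    by apply: measurableC; exact: S1_meas.
  move=> x /= hx hxx; apply: hx => _ /=.
  rewrite lee_fin normrM.
  have hi := dotv_coord x i; have hj := dotv_coord x j.
  have ni := normr_ge0 (x 0 i); have nj := normr_ge0 (x 0 j).
  have : `|x 0 i| ^+ 2 <= 1 by rewrite real_normK ?num_real //; lra.
  have : `|x 0 j| ^+ 2 <= 1 by rewrite real_normK ?num_real //; lra.
  nra.
Qed.
Lemma Rint_sum {dd : measure_display} {T : measurableType dd} {R : realType}
  (mu : {measure set T -> \bar R}) (D : set T) (I : Type) (s : seq I)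
  (f : I -> T -> R) :
  measurable D -> (forall i, mu.-integrable D (EFin \o f i)) ->
  \int[mu]_(x in D) (\sum_(i <- s) f i x) = \sum_(i <- s) \int[mu]_(x in D) f i x.
Proof.
move=> mD hf; elim: s => [|i s ih].
  under eq_Rintegral => x _ do rewrite big_nil.
  by rewrite Rintegral_cst // mul0r big_nil.
under eq_Rintegral => x _ do rewrite big_cons.
rewrite big_cons RintegralD //; first by rewrite ih.
have -> : (EFin \o (fun x => \sum_(j <- s) f j x)) =
    (fun x => (\sum_(j <- s) (EFin \o f j) x)%E).
  by apply: funext => x; rewrite /= sumEFin.
exact: (integrable_sum mD).
Qed.

Lemma integ_lin {dd : measure_display} {T : measurableType dd} {R : realType}
  (mu : {measure set T -> \bar R}) (D : set T) (I : Type) (s : seq I)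
  (c : I -> R) (f : I -> T -> R) :
  measurable D -> (forall i, mu.-integrable D (EFin \o f i)) ->
  mu.-integrable D (EFin \o (fun x => \sum_(i <- s) c i * f i x)).
Proof.
move=> mD hf.
have -> : (EFin \o (fun x => \sum_(i <- s) c i * f i x)) =
    (fun x => (\sum_(i <- s) (c i)%:E * (EFin \o f i) x)%E).
  by apply: funext => x; rewrite /= sumEFin.
apply: (integrable_sum mD) => i _; exact: (integrableZl mD (c i) (hf i)).
Qed.

Lemma moment_quad {R : realType} {d : nat} (rho : probability (vecB R d) R)
  (theta : 'rV[R]_d) :
  rho [set x : vecB R d | norm2 x <= 1] = 1%E ->
  Rintegral rho setT (fun y : vecB R d => dotv theta y ^+ 2) =
  dotv theta (theta *m second_moment rho).
Proof.
move=> hS.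
have hi := integ_coordM rho _ _ hS.
have hexp : (fun y : vecB R d => dotv theta y ^+ 2) =
  (fun y => \sum_(i < d) \sum_(j < d) (theta 0 i * theta 0 j) * (y 0 i * y 0 j)).
  apply: funext => y; rewrite expr2 /dotv mulr_suml; apply: eq_bigr => i _.
  by rewrite mulr_sumr; apply: eq_bigr => j _; ring.
rewrite hexp Rint_sum //; last by move=> i; apply: integ_lin.
have hi2 i j : rho.-integrable setT
    (EFin \o (fun y : vecB R d => theta 0 i * theta 0 j * (y 0 i * y 0 j))).
  pose g := (fun y : vecB R d => y 0 i * y 0 j).
  pose c := theta 0 i * theta 0 j.
  have -> : (EFin \o (fun y : vecB R d => theta 0 i * theta 0 j * (y 0 i * y 0 j))) =
    (fun y => (c%:E * (EFin \o g) y)%E) by apply: funext.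
  exact: (integrableZl measurableT _ (hi i j)).
under eq_bigr => i _ do rewrite (Rint_sum rho setT _ _ _ measurableT (hi2 i)).
under eq_bigr => i _ do under eq_bigr => j _ do rewrite (RintegralZl _ measurableT (hi i j)).
rewrite /dotv exchange_big /=; apply: eq_bigr => i _.
rewrite mxE mulr_sumr; apply: eq_bigr => j _; rewrite !mxE; ring.
Qed.
Lemma tail_bound {R : realType} {d : nat} (rho : probability (vecB R d) R)
  (sigma : R) (z : 'rV[R]_d) (r : R) :
  subgauss_sq_proj rho (sigma ^+ 2) -> sigma != 0 -> norm2 z = 1 ->
  r <= Rintegral rho setT (fun y : vecB R d => dotv z y ^+ 2) ->
  (rho [set x : vecB R d | (dotv z x ^+ 2 <= r)%R] <=
    (expR (- ((Rintegral rho setT (fun y : vecB R d => dotv z y ^+ 2) - r) ^+ 2)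
       / (2 * sigma ^+ 2))%R)%:E)%E.
Proof.
move=> hsg s0 z1.
set m := Rintegral _ _ _ => rm.
set s2 := sigma ^+ 2.
have s2p : 0 < s2.
  by rewrite /s2 lt_neqAle sqr_ge0 andbT eq_sym sqrf_eq0.
set t := - (m - r) / s2.
set c := (m - r) ^+ 2 / s2.
set A := [set x : vecB R d | dotv z x ^+ 2 <= r].
have mY : measurable_fun setT (fun x : vecB R d => dotv z x ^+ 2).
  exact: measurable_realfun.measurable_funX (meas_dot z).
have mA : measurable A.
  have := mY measurableT _ (measurable_itv `]-oo, r]); rewrite setTI => h.
  suff -> : A = (fun x : vecB R d => dotv z x ^+ 2) @^-1` `]-oo, r] by [].
  by apply/seteqP; split => x /=; rewrite in_itv /=.
have mE : measurable_fun setT (fun x : vecB R d => expR (t * (dotv z x ^+ 2 - m))).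
  apply: measurableT_comp; first exact: measurable_realfun.measurable_expR.
  apply: measurable_realfun.measurable_funM; first exact: measurable_cst.
  by apply: measurable_realfun.measurable_funB => //; exact: measurable_cst.
have hint := hsg z z1 t.
have step : ((expR c)%:E * \int[rho]_(x in setT) (\1_A x)%:E <=
    \int[rho]_(x in setT) (expR (t * (dotv z x ^+ 2 - m)))%:E)%E.
  rewrite -(@ge0_integralZl _ _ _ rho setT measurableT (fun x => (\1_A x)%:E)); last 3 first.
  - by apply/measurable_realfun.measurable_EFinP; exact: measurable_realfun.measurable_indic.
  - by move=> x _; rewrite lee_fin indicE.
  - by rewrite lee_fin expR_ge0.
  apply: ge0_le_integral => //.
  - under eq_fun do rewrite -EFinM.
    apply/measurable_realfun.measurable_EFinP.
    apply: measurable_realfun.measurable_funM; first exact: measurable_cst.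
    exact: measurable_realfun.measurable_indic.
  - exact/measurable_realfun.measurable_EFinP.
  move=> x _; rewrite -EFinM lee_fin indicE.
  have [xA|xA] := boolP (x \in A); last by rewrite mulr0 expR_ge0.
  rewrite mulr1 ler_expR.
  have hx : dotv z x ^+ 2 <= r by move: xA; rewrite inE.
  have -> : t * (dotv z x ^+ 2 - m) = c + (m - r) / s2 * (r - dotv z x ^+ 2).
    by rewrite /t /c; field; rewrite gt_eqF.
  rewrite lerDl mulr_ge0 // ?divr_ge0 ?subr_ge0 // ltW //.
rewrite integral_indic // setIT in step.
have := le_trans step hint.
have fA : rho A \is a fin_num by exact: fin_num_measure.
have [a ha] : exists a, rho A = a%:E by exists (fine (rho A)); rewrite fineK.
move=> h0.
have h : ((expR c)%:E * a%:E <= (expR (sigma ^+ 2 * t ^+ 2 / 2))%:E)%E.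
  by rewrite -ha; exact: h0.
rewrite ha; rewrite -EFinM !lee_fin in h; rewrite lee_fin.
have ec := expR_gt0 c.
have -> : - (m - r) ^+ 2 / (2 * s2) = s2 * t ^+ 2 / 2 - c.
  by rewrite /t /c; field; rewrite gt_eqF.
rewrite expRB ler_pdivlMr // mulrC //.
Qed.
Lemma meas_Z {R : realType} {d k : nat} {d0 : measure_display}
  {O : measurableType d0}
  (X : 'I_k -> O -> vecB R d) (I : O -> 'I_k) (theta : 'rV[R]_d) :
  (forall i, measurable_fun setT (X i)) ->
  (forall i, measurable [set w | I w = i]) ->
  measurable_fun setT (fun w => dotv theta (X (I w) w) ^+ 2).
Proof.
move=> hX hI.
have -> : (fun w => dotv theta (X (I w) w) ^+ 2) =
  (fun w => \sum_(i < k) (\1_[set w | I w = i] w * dotv theta (X i w) ^+ 2)).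
  apply: funext => w; rewrite (bigD1 (I w)) //= big1 ?addr0.
    by rewrite indicE mem_set // mul1r.
  move=> i hi; rewrite indicE memNset ?mul0r //= => h.
  by rewrite h eqxx in hi.
apply: measurable_fun_approximation.measurable_sum => i.
apply: measurable_realfun.measurable_funM.
  exact: measurable_realfun.measurable_indic.
apply: (measurableT_comp (f := fun x : vecB R d => dotv theta x ^+ 2)) => //.
exact: measurable_realfun.measurable_funX (meas_dot theta).
Qed.

Lemma meas_gt {R : realType} {d : nat} (theta : 'rV[R]_d) (r : R) :
  measurable [set x : vecB R d | r < dotv theta x ^+ 2].
Proof.
have mY : measurable_fun setT (fun x : vecB R d => dotv theta x ^+ 2).
  exact: measurable_realfun.measurable_funX (meas_dot theta).
have := mY measurableT _ (measurable_itv `]r, +oo[); rewrite setTI => h.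
suff -> : [set x : vecB R d | r < dotv theta x ^+ 2] =
  (fun x : vecB R d => dotv theta x ^+ 2) @^-1` `]r, +oo[ by [].
by apply/seteqP; split => x /=; rewrite in_itv /= andbT.
Qed.

Lemma prob_lb {R : realType} {d k : nat} {d0 : measure_display}
  {O : measurableType d0} (P : probability O R) (rho : probability (vecB R d) R)
  (X : 'I_k -> O -> vecB R d) (I : O -> 'I_k) (theta : 'rV[R]_d) (r : R) :
  (forall i, measurable_fun setT (X i)) -> iid_law P rho X ->
  measurable [set w | r < dotv theta (X (I w) w) ^+ 2] ->
  (\prod_(i < k) rho [set x : vecB R d | (r < dotv theta x ^+ 2)%R] <=
    P [set w | (r < dotv theta (X (I w) w) ^+ 2)%R])%E.
Proof.
move=> hX hiid mZr.
have mB := meas_gt theta r.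
rewrite -(hiid (fun=> [set x : vecB R d | r < dotv theta x ^+ 2]) (fun=> mB)).
apply: le_measure; rewrite ?inE //.
  apply: fin_bigcap_measurable; first exact: finite_finset.
  by move=> i _; rewrite -[X in measurable X]setTI; exact: hX.
by move=> w hw; exact: (hw (I w) Logic.I).
Qed.
Lemma prod_constE {R : realType} (b : R) n :
  (\prod_(i < n) b%:E)%E = (b ^+ n)%:E.
Proof.
elim: n => [|n ih]; first by rewrite big_ord0 expr0.
by rewrite big_ord_recr /= ih exprSr EFinM.
Qed.

Theorem mainTheorem6
  (R : realType) (d K k : nat) (rho : probability (vecB R d) R) (lam_x sigma : R)
  (d0 : measure_display) (O : measurableType d0) (P : probability O R)
  (X : 'I_k -> O -> vecB R d) (I : O -> 'I_k) (theta : 'rV[R]_d) :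
  (* (A3) on the feature distribution rho *)
  rho [set x : vecB R d | norm2 x <= 1] = 1%E ->
  is_lambda_min (second_moment rho) lam_x -> 0 < lam_x ->
  subgauss_sq_proj rho (sigma ^+ 2) ->
  (* the current arm set has k <= K arms, with i.i.d. rho features *)
  (k <= K)%N ->
  (forall i, measurable_fun setT (X i)) ->
  iid_law P rho X ->
  (* the arm selected by the agent: any measurable random index *)
  (forall i, measurable [set w | I w = i]) ->
  norm2 theta = 1 ->
  (\int[P]_(w in setT) ((dotv theta (X (I w) w)) ^+ 2)%:E
   >= \int[lebesgue_measure]_(s in `[0%R, lam_x])
        ((1 - expR (- ((lam_x - s) ^+ 2) / (2 * sigma ^+ 2))) ^+ K)%:E)%E.
Proof.
move=> hS hlam lam0 hsg hkK hX hiid hI th1.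
have k0 : (0 < k)%N.
  case: k X I hkK hX hiid hI => // X I _ _ _ _.
  have h : [set: O] = set0 by apply/seteqP; split => w //; case: (I w).
  have := @probability_setT _ _ _ P; rewrite h measure0 => /eqP.
  by rewrite eq_sym onee_eq0.
have K0 : (0 < K)%N := leq_trans k0 hkK.
have dth : dotv theta theta = 1.
  have h0 := dotv_ge0 theta; move: th1; rewrite /norm2 => h1.
  by rewrite -(sqr_sqrtr h0) h1 expr1n.
have MT : (second_moment rho)^T = second_moment rho.
  by apply/matrixP => i j; rewrite !mxE; apply: eq_Rintegral => x _; rewrite mulrC.
have lm : lam_x <= Rintegral rho setT (fun y : vecB R d => dotv theta y ^+ 2).
  by rewrite moment_quad //; exact: spectral_min.
pose Z := fun w => dotv theta (X (I w) w) ^+ 2.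
have mZ : measurable_fun setT Z := meas_Z X I theta hX hI.
pose ZRV : {RV P >-> R} := HB.pack Z (isMeasurableFun.Build _ _ _ _ Z mZ).
have -> : (\int[P]_(w in setT) (dotv theta (X (I w) w) ^+ 2)%:E)%E =
    expectation P ZRV by rewrite expectation_def.
rewrite ge0_expectation_ccdf; last by move=> w; exact: sqr_ge0.
have mccdf := ccdf_measurable ZRV.
apply: (@le_trans _ _ (\int[lebesgue_measure]_(s in `[0%R, lam_x]) ccdf ZRV s)%E);
  last first.
  apply: ge0_subset_integral => //.
  - exact: measurable_funS mccdf.
  - by move=> x /=; rewrite !in_itv /= => /andP[->].
apply: ge0_le_integral => //.
- move=> s _; rewrite lee_fin exprn_ge0 // subr_ge0 expR_le1.
  by rewrite mulNr oppr_le0 divr_ge0 // ?sqr_ge0 // mulr_ge0 // sqr_ge0.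
- apply: (measurable_funS measurableT) => //.
  apply/measurable_realfun.measurable_EFinP.
  apply: measurable_realfun.measurable_funX.
  apply: measurable_realfun.measurable_funB; first exact: measurable_cst.
  apply: measurableT_comp; first exact: measurable_realfun.measurable_expR.
  apply: measurable_realfun.measurable_funM; last exact: measurable_cst.
  apply: measurable_realfun.measurable_funN.
  apply: measurable_realfun.measurable_funX.
  apply: measurable_realfun.measurable_funB; first exact: measurable_cst.
  exact: measurable_id.
- exact: measurable_funS mccdf.
move=> s; rewrite /= in_itv /= => /andP[s0 sl].
have -> : ccdf ZRV s = P [set w | (s < dotv theta (X (I w) w) ^+ 2)%R].
  rewrite /ccdf /distribution /pushforward; congr (P _).
  by apply/seteqP; split => w /=; rewrite in_itv /= ?andbT.
have mZr : measurable [set w | s < dotv theta (X (I w) w) ^+ 2].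
  have := mZ measurableT _ (measurable_itv `]s, +oo[); rewrite setTI => h.
  suff -> : [set w | s < dotv theta (X (I w) w) ^+ 2] = Z @^-1` `]s, +oo[ by [].
  by apply/seteqP; split => w /=; rewrite in_itv /= ?andbT.
apply: le_trans (prob_lb P rho X I theta s hX hiid mZr).
set B := [set x : vecB R d | (s < dotv theta x ^+ 2)%R].
have [b hb] : exists b, rho B = b%:E.
  by exists (fine (rho B)); rewrite fineK //; exact: (fin_num_measure rho B (meas_gt theta s)).
have b0 : 0 <= b.
  by rewrite -lee_fin -hb; apply: measure_ge0.
rewrite hb prod_constE lee_fin.
have [->|sn0] := eqVneq sigma 0.
  rewrite expr0n /= mulr0 invr0 mulr0 expR0 subrr expr0n.
  by rewrite gtn_eqF // exprn_ge0.
set e := expR _.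
have e1 : e <= 1.
  by rewrite /e expR_le1 mulNr oppr_le0 divr_ge0 // ?sqr_ge0 // mulr_ge0 // sqr_ge0.
have hb1 : 1 - e <= b.
  have hc := probability_setC rho (meas_gt theta s).
  rewrite -/B hb in hc.
  have hcB : ~` B = [set x : vecB R d | (dotv theta x ^+ 2 <= s)%R].
    apply/seteqP; split => x /=.
      by move=> h; rewrite leNgt; apply/negP => h'; exact: h h'.
    by move=> h h'; move: h; rewrite leNgt h'.
  have := tail_bound rho sigma theta s hsg sn0 th1 (le_trans sl lm).
  rewrite -hcB hc -EFinB lee_fin.
  set m := Rintegral _ _ _ => hm.
  suff : expR (- (m - s) ^+ 2 / (2 * sigma ^+ 2)) <= e by lra.
  rewrite /e ler_expR !mulNr lerN2 ler_pM2r; last first.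
    by rewrite invr_gt0 mulr_gt0 // lt_neqAle sqr_ge0 andbT eq_sym sqrf_eq0.
  rewrite ler_sqr ?nnegrE ?subr_ge0 //; first by rewrite lerB.
  exact: le_trans sl lm.
have e1b : 0 <= 1 - e by rewrite subr_ge0.
apply: (@le_trans _ _ ((1 - e) ^+ k)).
  by apply: ler_wiXn2l => //; rewrite lerBlDr lerDl expR_ge0.
by apply: lerXn2r => //; rewrite nnegrE.
Qed.
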